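(* Let $\mathcal{C}$ be an $(n,s)$-curve of genus $g$ and let $D$ be a reduced non-special positive divisor of degree $g$ on the affine part of $\mathcal{C}$. Let $I_D\subset\mathbb{C}[x,y]/(f)$ be the ideal of polynomial functions vanishing on $D$ (with multiplicities). Then the images of the $g$ basis monomials $\upsilon_{\mathfrak{w}_1},\dots,\upsilon_{\mathfrak{w}_g}$ form a basis of the vector space $\big(\mathbb{C}[x,y]/(f)\big)/I_D$; that is, every polynomial function on $\mathcal{C}$ is congruent modulo $I_D$ to a unique linear combination of $\upsilon_{\mathfrak{w}_1},\dots,\upsilon_{\mathfrak{w}_g}$.
   Context: An $(n,s)$-curve ($n,s\geqslant2$ coprime) is $f(x,y;\lambda)\equiv -y^n+x^s+\sum_{j=0}^{n-2}\sum_{i=0}^{s-2}\lambda_{ns-in-js}y^jx^i=0$, $\lambda_k\in\mathbb{C}$, $\lambda_k=0$ for $k\leqslant0$, assumed of genus $g=\tfrac12(n-1)(s-1)$, compactified by one point $\infty$. Weights: $\mathrm{wgt}\,x=n$, $\mathrm{wgt}\,y=s$; monomials $\mathfrak{m}_{in+js}=x^iy^j$ ($0\leqslant j<n$) indexed by weight. Gap sequence $\mathfrak{W}=\mathbb{N}_0\setminus\{an+bs\mid a,b\in\mathbb{N}_0\}=\{\mathfrak{w}_1<\dots<\mathfrak{w}_g\}$. Basis monomials: $\upsilon_{\mathfrak{w}_i}=\mathfrak{m}_{2g-1-\mathfrak{w}_i}$, $i=1,\dots,g$; the differentials $\mathrm{d}u_{\mathfrak{w}_i}=\upsilon_{\mathfrak{w}_i}\,\mathrm{d}x/\partial_yf$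 form a basis of holomorphic differentials. A positive divisor is reduced if it contains no full fibre $\{(a,b_1),\dots,(a,b_n)\}$ of $x$; a degree $g$ divisor is non-special if no nonzero holomorphic differential vanishes on it. *)

(* Defs.v *)
(* Bivariate polynomials are  {poly {poly C}} : the OUTER variable is  y,
   the INNER variable (coefficients) is  x. *)
From HB Require Import structures.
From mathcomp Require Import all_boot all_order all_algebra.
From mathcomp.real_closed Require Import complex.
From mathcomp Require Import reals.

Set Implicit Arguments.
Unset Strict Implicit.
Unset Printing Implicit Defensive.

Import Order.TTheory GRing.Theory Num.Theory.
Local Open Scope ring_scope.

Section Curves.
Variable C : fieldType.

Definition Xp : {poly {poly C}} := ('X)%:P.
Definition Yp : {poly {poly C}} := 'X.

Definition cst (c : C) : {poly {poly C}} := c%:P%:P.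

Definition evalXY (h : {poly {poly C}}) (P : C * C) : C := (h.[P.2%:P]).[P.1].

Definition dX (h : {poly {poly C}}) : {poly {poly C}} := map_poly deriv h.
Definition dY (h : {poly {poly C}}) : {poly {poly C}} := deriv h.

(* the (n,s)-curve polynomial
   f = -y^n + x^s + sum_{j<=n-2} sum_{i<=s-2} lambda_{ns-in-js} y^j x^i,
   with lambda_k = 0 for k <= 0. *)
Definition nscurve (n s : nat) (lambda : nat -> C) : {poly {poly C}} :=
  - Yp ^+ n + Xp ^+ s +
  \sum_(j < n.-1) \sum_(i < s.-1)
     cst (if (i * n + j * s < n * s)%N then lambda (n * s - i * n - j * s)%N else 0)
       * (Yp ^+ j * Xp ^+ i).

(* the affine part of the curve is nonsingular (this is the standing
   assumption that the curve has genus g = (n-1)(s-1)/2) *)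
Definition affine_smooth (f : {poly {poly C}}) : Prop :=
  forall P : C * C, evalXY f P = 0 ->
    evalXY (dX f) P != 0 \/ evalXY (dY f) P != 0.

(* h vanishes at the point P = (a,b) of the curve f = 0 to order >= m, i.e.
   h lies in  m_P^m  of the local ring  O_P = C[x,y]_{m_P} / (f),
   where m_P = (x - a, y - b):  there is u with u(P) <> 0 and
   u h in (f) + (x-a, y-b)^m  in C[x,y]. *)
Definition vanishes_at (f : {poly {poly C}}) (P : C * C) (m : nat)
    (h : {poly {poly C}}) : Prop :=
  exists (u q : {poly {poly C}}) (r : 'I_m.+1 -> {poly {poly C}}),
    evalXY u P != 0 /\
    u * h = q * f + \sum_(k < m.+1)
       r k * (Xp - cst P.1) ^+ k * (Yp - cst P.2) ^+ (m - k).

(* positive divisors on the affine part: finite multisets of points,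
   represented by a sequence (multiplicity = number of occurrences);
   the degree is the size of the sequence *)
Definition on_curve (f : {poly {poly C}}) (D : seq (C * C)) : Prop :=
  forall P, P \in D -> evalXY f P = 0.

Definition vanishes_on (f : {poly {poly C}}) (D : seq (C * C))
    (h : {poly {poly C}}) : Prop :=
  forall P, P \in D -> vanishes_at f P (count_mem P D) h.

(* the fibre of x over a: the points (a,b_1),...,(a,b_n), the b_k being the
   roots (with multiplicity) of f(a, y).  D is reduced if it contains no full
   fibre. *)
Definition fibre_poly (f : {poly {poly C}}) (a : C) : {poly C} :=
  map_poly (fun c : {poly C} => c.[a]) f.

Definition reduced (f : {poly {poly C}}) (D : seq (C * C)) : Prop :=
  ~ exists a : C, forall b : C,
      (mup b (fibre_poly f a) <= count_mem (a, b) D)%N.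

Definition genus (n s : nat) : nat := ((n.-1 * s.-1) %/ 2)%N.

Definition in_semigroup (n s w : nat) : bool :=
  has (fun i => has (fun j => (i * n + j * s == w)%N) (iota 0 w.+1)) (iota 0 w.+1).

(* all gaps are < 2g (Frobenius number 2g - 1) *)
Definition gaps (n s : nat) : seq nat :=
  [seq w <- iota 0 (2 * genus n s)%N | ~~ in_semigroup n s w].

(* w_{i+1}, for i : 'I_g  (0-based index) *)
Definition gap (n s : nat) (i : nat) : nat := nth 0 (gaps n s) i.

(* the monomial  m_k = x^i y^j  with  i n + j s = k,  0 <= j < n *)
Definition mono_j (n s k : nat) : nat :=
  find (fun j => (j * s <= k)%N && (n %| k - j * s)%N) (iota 0 n).
Definition mono (n s k : nat) : {poly {poly C}} :=
  Xp ^+ ((k - mono_j n s k * s) %/ n)%N * Yp ^+ (mono_j n s k).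

Definition upsilon (n s : nat) (i : nat) : {poly {poly C}} :=
  mono n s (2 * genus n s - 1 - gap n s i)%N.

(* D is non-special: no nonzero holomorphic differential
   du = (sum_i c_i upsilon_{w_i}) dx / f_y  vanishes on D.
   On the nonsingular affine part dx/f_y is holomorphic and nowhere zero,
   so ord_P(h dx/f_y) = ord_P(h) at affine points P. *)
Definition nonspecial (n s : nat) (f : {poly {poly C}}) (D : seq (C * C)) : Prop :=
  forall c : 'rV[C]_(genus n s),
    vanishes_on f D (\sum_(i < genus n s) cst (c ord0 i) * upsilon n s i) ->
    c = 0.

End Curves.

(* Main.v *)
Require Import Defs.
From HB Require Import structures.
From mathcomp Require Import all_boot all_order all_algebra.
From mathcomp.real_closed Require Import complex.
From mathcomp Require Import reals.
From Stdlib Require Import IndefiniteDescription.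
From mathcomp Require Import ring.
Import GRing.Theory Num.Theory.
Local Open Scope ring_scope.

Section MK.
Variable R : comNzRingType.

Fixpoint mkg (X Y : R) (k : nat) (z : R) : Prop :=
  match k with
  | 0%N => True
  | k'.+1 => exists u v, mkg X Y k' u /\ mkg X Y k' v /\ z = X * u + Y * v
  end.

Variables X Y : R.

Lemma mk0 k : mkg X Y k 0.
Proof.
elim: k => //= k IH; exists 0, 0; split=> //; split=> //; by rewrite !mulr0 addr0.
Qed.

Lemma mkD k z1 z2 : mkg X Y k z1 -> mkg X Y k z2 -> mkg X Y k (z1 + z2).
Proof.
elim: k z1 z2 => //= k IH z1 z2 [u1 [v1 [h1 [h1' ->]]]] [u2 [v2 [h2 [h2' ->]]]].
exists (u1 + u2), (v1 + v2); split; first exact: IH.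
split; first exact: IH. ring.
Qed.

Lemma mkM k w z : mkg X Y k z -> mkg X Y k (w * z).
Proof.
elim: k w z => //= k IH w z [u [v [h1 [h2 ->]]]].
exists (w * u), (w * v); split; first exact: IH.
split; first exact: IH. ring.
Qed.

Lemma mkN k z : mkg X Y k z -> mkg X Y k (- z).
Proof. by move=> h; rewrite -mulN1r; apply: mkM. Qed.

Lemma mkB k z1 z2 : mkg X Y k z1 -> mkg X Y k z2 -> mkg X Y k (z1 - z2).
Proof. by move=> h1 h2; apply: mkD => //; apply: mkN. Qed.

Lemma mkS k z : mkg X Y k.+1 z -> mkg X Y k z.
Proof.
elim: k z => //= k IH z [u [v [h1 [h2 ->]]]].
by exists u, v; split; [exact: IH | split; [exact: IH|]].
Qed.

Lemma mk_mul a b z1 z2 : mkg X Y a z1 -> mkg X Y b z2 -> mkg X Y (a + b) (z1 * z2).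
Proof.
elim: a z1 => [|a IH] z1 /=.
  by move=> _ h; rewrite add0n; apply: mkM.
move=> [u [v [h1 [h2 ->]]]] hz.
exists (u * z2), (v * z2); split; first exact: IH.
split; first exact: IH. ring.
Qed.

Lemma mkX1 k z : mkg X Y k z -> mkg X Y k.+1 (X * z).
Proof. by move=> h; exists z, 0; split=> //; split; [exact: mk0|]; rewrite mulr0 addr0. Qed.

Lemma mkY1 k z : mkg X Y k z -> mkg X Y k.+1 (Y * z).
Proof. by move=> h; exists 0, z; split; [exact: mk0|]; split=> //; rewrite mulr0 add0r. Qed.

Lemma mk_powX k : mkg X Y k (X ^+ k).
Proof. elim: k => [|k IH] //; rewrite exprS; exact: mkX1. Qed.

Lemma mk_sum m z : mkg X Y m z ->
  exists r : nat -> R, z = \sum_(i < m.+1) r i * X ^+ i * Y ^+ (m - i).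
Proof.
elim: m z => [|m IH] z /=.
  by move=> _; exists (fun _ => z); rewrite big_ord1 !expr0 !mulr1.
move=> [u [v [/IH [r hr] [/IH [s' hs] ->]]]].
exists (fun k => (if k is k'.+1 then r k' else 0) + (if (k < m.+1)%N then s' k else 0)).
rewrite (eq_bigr (fun i : 'I_(m.+2) => (if (i:nat) is k'.+1 then r k' else 0) * X ^+ i * Y ^+ (m.+1 - i)
   + (if (i < m.+1)%N then s' i else 0) * X ^+ i * Y ^+ (m.+1 - i))); last first.
  by move=> i _; rewrite !mulrDl.
rewrite big_split /=.
rewrite big_ord_recl /= mul0r mul0r add0r.
rewrite [X in _ = _ + X]big_ord_recr /= ltnn mul0r mul0r addr0.
rewrite hr hs mulr_sumr mulr_sumr.
congr (_ + _); apply: eq_bigr => i _.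
  by rewrite /bump /= add1n subSS exprS add0n !mulrA [X * r i]mulrC.
have hi : (i <= m)%N by rewrite -ltnS.
rewrite ltn_ord (subSn hi) exprS.
set a := s' i; set b := X ^+ i; set c := Y ^+ (m - i); ring.
Qed.
End MK.
Arguments mkg {R}.

Lemma mk_sym (R : comNzRingType) (X Y : R) k z : mkg X Y k z -> mkg Y X k z.
Proof.
elim: k z => //= k IH z [u [v [h1 [h2 ->]]]].
by exists v, u; split; [exact: IH| split; [exact: IH| rewrite addrC]].
Qed.

Section Poly2.
Variable C : fieldType.
Notation P2 := {poly {poly C}}.

Lemma cstD (a b : C) : cst (a + b) = cst a + cst b.
Proof. by rewrite /cst !rmorphD. Qed.
Lemma cstM (a b : C) : cst (a * b) = cst a * cst b.
Proof. by rewrite /cst !rmorphM. Qed.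
Lemma cstN (a : C) : cst (- a) = - cst a.
Proof. by rewrite /cst !rmorphN. Qed.
Lemma cstB (a b : C) : cst (a - b) = cst a - cst b.
Proof. by rewrite /cst !rmorphB. Qed.
Lemma cst0 : cst (0 : C) = 0.
Proof. by rewrite /cst !rmorph0. Qed.
Lemma cst1 : cst (1 : C) = 1.
Proof. by rewrite /cst !rmorph1. Qed.

Lemma evD (p q : P2) P : evalXY (p + q) P = evalXY p P + evalXY q P.
Proof. by rewrite /evalXY !hornerD. Qed.
Lemma evN (p : P2) P : evalXY (- p) P = - evalXY p P.
Proof. by rewrite /evalXY !hornerN. Qed.
Lemma evB (p q : P2) P : evalXY (p - q) P = evalXY p P - evalXY q P.
Proof. by rewrite /evalXY !hornerD !hornerN. Qed.
Lemma evM (p q : P2) P : evalXY (p * q) P = evalXY p P * evalXY q P.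
Proof. by rewrite /evalXY !hornerM. Qed.
Lemma evC (c : C) P : evalXY (cst c) P = c.
Proof. by rewrite /evalXY /cst !hornerC. Qed.
Lemma ev1 P : evalXY (1 : P2) P = 1.
Proof. by rewrite -cst1 evC. Qed.
Lemma evXp P : evalXY (Xp C) P = P.1.
Proof. by rewrite /evalXY /Xp hornerC hornerX. Qed.
Lemma evYp P : evalXY (Yp C) P = P.2.
Proof. by rewrite /evalXY /Yp hornerX hornerC. Qed.

Lemma taylor (a b : C) (z : P2) : exists z1 z2,
  z = cst (evalXY z (a, b)) + ((Xp C) - cst a) * z1 + ((Yp C) - cst b) * z2.
Proof.
have /factor_theorem [z2 hz2] : root (z - (z.[b%:P])%:P) b%:P.
  by rewrite /root hornerD hornerN hornerC subrr.
set w := z.[b%:P] in hz2.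
have /factor_theorem [w1 hw1] : root (w - (w.[a])%:P) a.
  by rewrite /root hornerD hornerN hornerC subrr.
exists w1%:P, z2.
have -> : (Xp C) - cst a = ('X - a%:P)%:P by rewrite /Xp /cst rmorphB.
have -> : (Yp C) - cst b = 'X - (b%:P)%:P by [].
rewrite -rmorphM [('X - a%:P) * w1]mulrC -hw1 [_ * z2]mulrC -hz2 /evalXY /= -/w /cst.
rewrite rmorphB /=; ring.
Qed.

Definition dXM (p q : P2) : dX (p * q) = dX p * q + p * dX q.
Proof.
apply/polyP => i; rewrite /dX coefD coef_map_id0 ?deriv0 // !coefM.
rewrite raddf_sum /= -big_split /=; apply: eq_bigr => j _.
by rewrite derivM !coef_map_id0 ?deriv0.
Qed.
Lemma dXD (p q : P2) : dX (p + q) = dX p + dX q.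
Proof. by rewrite /dX raddfD. Qed.
Lemma dXB (p q : P2) : dX (p - q) = dX p - dX q.
Proof. by rewrite /dX raddfB. Qed.
Lemma dX_cst (c : C) : dX (cst c) = 0.
Proof. by rewrite /dX /cst map_polyC /= derivC. Qed.
Lemma dX_Xp : dX (Xp C) = 1.
Proof. by rewrite /dX /Xp map_polyC /= derivX. Qed.
Lemma dX_Yp : dX (Yp C) = 0.
Proof.
apply/polyP => i; rewrite /dX /Yp coef_map_id0 ?deriv0 // coefX coef0.
by case: (i == 1)%N; rewrite ?derivC ?deriv0 //= -polyC1 derivC.
Qed.

Lemma dYM (p q : P2) : dY (p * q) = dY p * q + p * dY q.
Proof. exact: derivM. Qed.
Lemma dYD (p q : P2) : dY (p + q) = dY p + dY q.
Proof. exact: derivD. Qed.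
Lemma dYB (p q : P2) : dY (p - q) = dY p - dY q.
Proof. exact: derivB. Qed.
Lemma dY_cst (c : C) : dY (cst c) = 0.
Proof. exact: derivC. Qed.
Lemma dY_Xp : dY (Xp C) = 0.
Proof. exact: derivC. Qed.
Lemma dY_Yp : dY (Yp C) = 1.
Proof. exact: derivX. Qed.

End Poly2.
Arguments taylor {C}.

Section Key.
Variable C : fieldType.
Notation P2 := {poly {poly C}}.
Variables (f T S : P2).
Hypothesis H0 : forall z : P2, exists c, mkg T S 1 (z - cst c).
Hypothesis Lin : exists g q0 e, mkg T S 2 e /\ S = cst g * T + q0 * f + e.

Lemma key k z : mkg T S k z ->
  exists c q z', mkg T S k.+1 z' /\ z = cst c * T ^+ k + q * f + z'.
Proof.
case: Lin => g [q0 [e [he hS]]].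
elim: k z => [|k IH] z /=.
  move=> _; case: (H0 z) => c hc; exists c, 0, (z - cst c); split=> //.
  by rewrite expr0 mulr1 mul0r addr0 addrC subrK.
move=> [u [v [/IH [c1 [q1 [u' [hu' ->]]]] [/IH [c2 [q2 [v' [hv' ->]]]] ->]]]].
exists (c1 + c2 * g), (T * q1 + S * q2 + cst c2 * T ^+ k * q0),
  (T * u' + S * v' + cst c2 * T ^+ k * e).
split.
  change (mkg T S k.+2 (T * u' + S * v' + cst c2 * T ^+ k * e)).   apply: mkD; first apply: mkD.
  - by apply: mkX1.
  - by apply: mkY1.
  rewrite -mulrA; apply: mkM; rewrite -addn2; apply: mk_mul => //; exact: mk_powX.
rewrite cstD cstM exprS.
set c1' := cst c1; set c2' := cst c2; set g' := cst g; set Tk := T ^+ k.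
rewrite hS; ring.
Qed.

Lemma span m h : exists d : nat -> C, exists q z,
  mkg T S m z /\ h = \sum_(i < m) cst (d i) * T ^+ i + q * f + z.
Proof.
elim: m => [|m [d [q [z [hz hh]]]]].
  by exists (fun _ => 0), 0, h; split=> //; rewrite big_ord0 mul0r !add0r.
case: (key m z hz) => c [q' [z' [hz' hzz]]].
exists (fun i => if i == m then c else d i), (q + q'), z'; split=> //.
rewrite big_ord_recr /= eqxx.
rewrite (eq_bigr (fun i : 'I_m => cst (d i) * T ^+ i)); last first.
  by move=> i _; rewrite ltn_eqF.
rewrite hh hzz; set s := \sum_(i < m) _; ring.
Qed.
End Key.
Arguments span {C f T S}.

Definition tpar (C : fieldType) (f : {poly {poly C}}) (P : C * C) :=
  if evalXY (dY f) P != 0 then Xp C - cst P.1 else Yp C - cst P.2.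
Arguments tpar {C}.

Lemma local (C : fieldType) (f : {poly {poly C}}) (P : C * C) :
  evalXY f P = 0 -> (evalXY (dX f) P != 0 \/ evalXY (dY f) P != 0) ->
  forall m h, exists d : nat -> C, exists q z,
    mkg (Xp C - cst P.1) (Yp C - cst P.2) m z /\
    h = \sum_(i < m) cst (d i) * tpar f P ^+ i + q * f + z.
Proof.
case: P => a b /= hf0 hsm m h.
set X := Xp C - cst a; set Y := Yp C - cst b.
have eX : evalXY X (a, b) = 0 by rewrite evB evXp evC subrr.
have eY : evalXY Y (a, b) = 0 by rewrite evB evYp evC subrr.
case: (taylor a b f) => A [B]; rewrite hf0 cst0 add0r -/X -/Y => hf.
case: (taylor a b A) => A1 [A2]; rewrite -/X -/Y => hA.
case: (taylor a b B) => B1 [B2]; rewrite -/X -/Y => hB.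
set al := evalXY A (a, b) in hA; set be := evalXY B (a, b) in hB.
have hdY : evalXY (dY f) (a, b) = be.
  rewrite hf dYD !dYM !dYB dY_Xp dY_Yp !dY_cst !evD !evM !evB !evXp !evYp !evC /= !subrr.
  by rewrite !mul0r !add0r subr0 mul1r addr0.
have hdX : evalXY (dX f) (a, b) = al.
  rewrite hf dXD !dXM !dXB dX_Xp dX_Yp !dX_cst !evD !evM !evB !evXp !evYp !evC /= !subrr.
  by rewrite !mul0r !addr0 subr0 mul1r.
have H0 : forall z, exists c, mkg X Y 1 (z - cst c).
  move=> z; case: (taylor a b z) => z1 [z2 hz]; exists (evalXY z (a, b)).
  exists z1, z2; split=> //; split=> //; apply/eqP; rewrite subr_eq; apply/eqP; rewrite {1}hz; by rewrite [RHS]addrC addrA.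
have mk1A : mkg X Y 1 (X * A1 + Y * A2) by exists A1, A2.
have mk1B : mkg X Y 1 (X * B1 + Y * B2) by exists B1, B2.
have mk2 : mkg X Y 2 (X * (X * A1 + Y * A2) + Y * (X * B1 + Y * B2)).
  by apply: mkD; [apply: mkX1 | apply: mkY1].
rewrite /tpar /= hdY.
case: (eqVneq be 0) => [be0 | bne0] /=.
- have ane0 : al != 0 by case: hsm; rewrite ?hdX ?hdY ?be0 ?eqxx.
  have Lin : exists g q0 e, mkg Y X 2 e /\ X = cst g * Y + q0 * f + e.
    exists (- (be / al)), (cst al^-1),
      (- (cst al^-1 * (X * (X * A1 + Y * A2) + Y * (X * B1 + Y * B2)))).
    split; first by apply: mk_sym; apply: mkN; apply: mkM.
    have hib : cst al^-1 * cst al = 1 by rewrite -cstM mulVf // cst1.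
    rewrite cstN cstM hf hA hB; set ib := cst al^-1 in hib *.
    set A' := cst al in hib *; set B' := cst be.
    transitivity (ib * A' * X); first by rewrite hib mul1r.
    ring.
  have H0' : forall z, exists c, mkg Y X 1 (z - cst c).
    by move=> z; case: (H0 z) => c hc; exists c; apply: mk_sym.
  case: (span H0' Lin m h) => d [q [z [hz hh]]].
  by exists d, q, z; split=> //; apply: mk_sym.
- have Lin : exists g q0 e, mkg X Y 2 e /\ Y = cst g * X + q0 * f + e.
    exists (- (al / be)), (cst be^-1),
      (- (cst be^-1 * (X * (X * A1 + Y * A2) + Y * (X * B1 + Y * B2)))).
    split; first by apply: mkN; apply: mkM.
    have hib : cst be^-1 * cst be = 1 by rewrite -cstM mulVf // cst1.
    rewrite cstN cstM hf hA hB; set ib := cst be^-1 in hib *.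
    set B' := cst be in hib *; set A' := cst al.
    transitivity (ib * B' * Y); first by rewrite hib mul1r.
    ring.
  exact: (span H0 Lin m h).
Qed.

Section J.
Variable C : fieldType.
Notation P2 := {poly {poly C}}.
Variable f : P2.

Definition Jm (P : C * C) (m : nat) (w : P2) :=
  exists q z, mkg (Xp C - cst P.1) (Yp C - cst P.2) m z /\ w = q * f + z.

Lemma J_add P m w1 w2 : Jm P m w1 -> Jm P m w2 -> Jm P m (w1 + w2).
Proof.
move=> [q1 [z1 [h1 ->]]] [q2 [z2 [h2 ->]]]; exists (q1 + q2), (z1 + z2).
split; first exact: mkD. ring.
Qed.

Lemma J_mul P m a w : Jm P m w -> Jm P m (a * w).
Proof.
move=> [q [z [h ->]]]; exists (a * q), (a * z); split; first exact: mkM. ring.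
Qed.

Lemma J_sub P m w1 w2 : Jm P m w1 -> Jm P m w2 -> Jm P m (w1 - w2).
Proof. by move=> h1 h2; apply: J_add => //; rewrite -mulN1r; apply: J_mul. Qed.

Lemma J_0 P m : Jm P m 0.
Proof. by exists 0, 0; split; [exact: mk0 | rewrite mul0r addr0]. Qed.

Lemma J_sum P m (I : finType) (F : I -> P2) :
  (forall i, Jm P m (F i)) -> Jm P m (\sum_i F i).
Proof.
move=> h; apply: (big_ind (Jm P m)); [exact: J_0 | exact: J_add | by []].
Qed.

Lemma J_van P m w : Jm P m w -> vanishes_at f P m w.
Proof.
move=> [q [z [/mk_sum [r hr] ->]]]; exists 1, q, (fun k => r k); split.
  by rewrite ev1 oner_neq0.
by rewrite mul1r hr.
Qed.

Lemma van_sub P m h1 h2 : vanishes_at f P m h1 -> vanishes_at f P m h2 ->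
  vanishes_at f P m (h1 - h2).
Proof.
move=> [u1 [q1 [r1 [hu1 e1]]]] [u2 [q2 [r2 [hu2 e2]]]].
exists (u1 * u2), (u2 * q1 - u1 * q2), (fun k => u2 * r1 k - u1 * r2 k); split.
  by rewrite evM mulf_neq0.
have -> : u1 * u2 * (h1 - h2) = u2 * (u1 * h1) - u1 * (u2 * h2) by ring.
rewrite e1 e2.
have -> : \sum_(k < m.+1) (u2 * r1 k - u1 * r2 k) * (Xp C - cst P.1) ^+ k * (Yp C - cst P.2) ^+ (m - k)
   = u2 * \sum_(k < m.+1) r1 k * (Xp C - cst P.1) ^+ k * (Yp C - cst P.2) ^+ (m - k)
     - u1 * \sum_(k < m.+1) r2 k * (Xp C - cst P.1) ^+ k * (Yp C - cst P.2) ^+ (m - k).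
  by rewrite !mulr_sumr -sumrB; apply: eq_bigr => k _; rewrite !mulrBl !mulrA.
set S1 := \sum_(k < m.+1) _; set S2 := \sum_(k < m.+1) _; ring.
Qed.

End J.

Lemma cst_sum (C : fieldType) (I : finType) (F : I -> C) :
  cst (\sum_i F i) = \sum_i cst (F i).
Proof. by rewrite /cst !rmorph_sum. Qed.

Lemma count_sum (T : eqType) (V : nmodType) (x0 P : T) (F : nat -> V) (D : seq T) :
  \sum_(0 <= j < size D | nth x0 D j == P) F (count_mem P (take j D)) =
  \sum_(0 <= i < count_mem P D) F i.
Proof.
elim/last_ind: D => [|D Q IH]; first by rewrite !big_geq.
rewrite size_rcons big_mkcond big_nat_recr //=.
rewrite (eq_big_nat _ _ (F2 := fun j => if nth x0 D j == P then F (count_mem P (take j D)) else 0));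
  last first.
  move=> j /andP [_ hj]; rewrite nth_rcons hj -cats1 takel_cat //; exact: ltnW.
rewrite -big_mkcond IH nth_rcons ltnn eqxx -cats1 take_size_cat // count_cat /=.
case: (boolP (Q == P)) => hQ /=.
  by rewrite addn0 addn1 big_nat_recr.
by rewrite !addn0 addr0.
Qed.

Theorem mainTheorem3 (R : realType) (n s : nat) (lambda : nat -> R[i])
  (Hn : (2 <= n)%N) (Hs : (2 <= s)%N) (Hcop : coprime n s)
  (Hsmooth : affine_smooth (nscurve n s lambda))
  (D : seq (R[i] * R[i]))
  (HdegD : size D = genus n s)
  (HonD : on_curve (nscurve n s lambda) D)
  (Hred : reduced (nscurve n s lambda) D)
  (Hns : nonspecial n s (nscurve n s lambda) D) :
  forall h : {poly {poly R[i]}},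
    exists c : 'rV[R[i]]_(genus n s),
      vanishes_on (nscurve n s lambda) D
        (h - \sum_(k < genus n s) cst (c ord0 k) * upsilon R[i] n s k) /\
      forall c' : 'rV[R[i]]_(genus n s),
        vanishes_on (nscurve n s lambda) D
          (h - \sum_(k < genus n s) cst (c' ord0 k) * upsilon R[i] n s k) ->
        c' = c.
Proof.
move=> h.
set f := nscurve n s lambda in Hsmooth HonD Hred Hns *.
set g := genus n s in HdegD Hns *.
set ups := upsilon R[i] n s.
have Hch : forall (P : R[i] * R[i]) (w : {poly {poly R[i]}}), exists d : nat -> R[i],
    P \in D -> Jm _ f P (count_mem P D)
      (w - \sum_(i < count_mem P D) cst (d i) * tpar f P ^+ i).
  move=> P w; case: (boolP (P \in D)) => hP; last by exists (fun _ => 0).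
  have [d [q [z [hz hw]]]] := @local _ f P (HonD P hP) (Hsmooth P (HonD P hP)) (count_mem P D) w.
  exists d => _; exists q, z; split=> //.
  by apply/eqP; rewrite subr_eq {1}hw; apply/eqP; rewrite [RHS]addrC addrA.
pose dd P w := proj1_sig (constructive_indefinite_description _ (Hch P w)).
have Hdd : forall P w, P \in D -> Jm _ f P (count_mem P D)
      (w - \sum_(i < count_mem P D) cst (dd P w i) * tpar f P ^+ i).
  by move=> P w; exact: (proj2_sig (constructive_indefinite_description _ (Hch P w))).
pose x0 : R[i] * R[i] := (0, 0).
pose ij (j : 'I_g) := count_mem (nth x0 D j) (take j D).
have Hbij : forall P (F : nat -> {poly {poly R[i]}}),
    \sum_(i < count_mem P D) F i =
    \sum_(j < g | nth x0 D j == P) F (count_mem P (take j D)).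
  move=> P F; have := @count_sum _ _ x0 P F D; rewrite !big_mkord HdegD => ->.
  by [].
pose M : 'M[R[i]]_g := \matrix_(k, j) dd (nth x0 D j) (ups k) (ij j).
have ClaimA : forall (c : 'rV[R[i]]_g) P, P \in D ->
    Jm _ f P (count_mem P D)
      (\sum_(k < g) cst (c ord0 k) * ups k -
       \sum_(j < g | nth x0 D j == P) cst ((c *m M) ord0 j) * tpar f P ^+ (ij j)).
  move=> c P hP.
  have hJ := @J_sum _ f P _ _ _ (fun k => @J_mul _ f P _ (cst (c ord0 k)) _ (Hdd P (ups k) hP)).
  suff -> : \sum_(k < g) cst (c ord0 k) * ups k -
       \sum_(j < g | nth x0 D j == P) cst ((c *m M) ord0 j) * tpar f P ^+ (ij j) =
     \sum_(k < g) cst (c ord0 k) * (ups k - \sum_(i < count_mem P D)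
        cst (dd P (ups k) i) * tpar f P ^+ i) by [].
  rewrite [RHS](eq_bigr (fun k => cst (c ord0 k) * ups k - \sum_(j < g | nth x0 D j == P)
     cst (c ord0 k) * (cst (dd P (ups k) (count_mem P (take j D))) *
       tpar f P ^+ count_mem P (take j D)))); last by move=> k _; rewrite (Hbij P (fun i => cst (dd P (ups k) i) * tpar f P ^+ i)) mulrBr mulr_sumr.
  rewrite sumrB; congr (_ - _).
  rewrite exchange_big /=; apply: eq_bigr => j /eqP pj.
  rewrite /ij pj !mxE cst_sum mulr_suml; apply: eq_bigr => k _.
  by rewrite /M !mxE /ij pj cstM mulrA.
have HM : M \in unitmx.
  rewrite -row_free_unit -kermx_eq0.
  apply/contraT => /rowV0Pn [v hv vne0].
  have vM : v *m M = 0 by apply/eqP; rewrite -sub_kermx.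
  suff hv0 : v = 0 by rewrite hv0 eqxx in vne0.
  apply: Hns => P hP; apply: J_van.
  have := ClaimA v P hP; rewrite vM.
  set S := \sum_(j < g | nth x0 D j == P) _.
  have -> : S = 0 by apply: big1 => j _; rewrite mxE cst0 mul0r.
  by rewrite subr0.
pose e : 'rV[R[i]]_g := \row_j dd (nth x0 D j) h (ij j).
have Hh : vanishes_on f D (h - \sum_(k < g) cst ((e *m invmx M) ord0 k) * ups k).
  move=> P hP; apply: J_van.
  have hcM : (e *m invmx M) *m M = e by rewrite mulmxKV.
  have h1 := Hdd P h hP.
  rewrite (Hbij P (fun i => cst (dd P h i) * tpar f P ^+ i)) in h1.
  have h2 := ClaimA (e *m invmx M) P hP; rewrite hcM in h2.
  have := @J_sub _ f P _ _ _ h1 h2.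
  set S1 := \sum_(j < g | nth x0 D j == P) _; set S2 := \sum_(j < g | nth x0 D j == P) _.
  have -> : S1 = S2.
    apply: eq_bigr => j /eqP pj; by rewrite /e mxE /ij pj.
  by rewrite opprB addrA subrK.
exists (e *m invmx M); split=> //.
move=> c' hc'.
suff : e *m invmx M - c' = 0 by move/eqP; rewrite subr_eq0 => /eqP ->.
apply: Hns => P hP.
have := @van_sub _ f P _ _ _ (hc' P hP) (Hh P hP).
set cc := e *m invmx M.
suff -> : \sum_(k < g) cst ((cc - c') ord0 k) * ups k =
  (h - \sum_(k < g) cst (c' ord0 k) * ups k) - (h - \sum_(k < g) cst (cc ord0 k) * ups k) by [].
rewrite (eq_bigr (fun k => cst (cc ord0 k) * ups k - cst (c' ord0 k) * ups k)); last first.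
  by move=> k _; rewrite !mxE cstB mulrBl.
rewrite sumrB; set A := \sum_(k < g) _; set B := \sum_(k < g) _; ring.
Qed.
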